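(* Let $f(x,y)=\sum_{i,j=-\infty}^{\infty}\lambda(i,j)x^iy^j$ and $g(x,y)=\sum_{i,j=-\infty}^{\infty}c(i,j)x^iy^j$ be two nonzero bilateral formal series with $g(x,y)=-g(y,x)$. If $f\perp g$, then $g\perp g$.
   Context: A bilateral formal series in $x,y$ is a formal expression $\sum_{i,j\in\mathbb{Z}}c(i,j)x^iy^j$ with complex coefficients; $g(x,y)=-g(y,x)$ means $c(i,j)=-c(j,i)$ for all $i,j$. For two such series $f,g$, the expression $g(u,v)f(z,w)-g(u,w)f(z,v)+g(v,w)f(z,u)$ is a well-defined formal series in four independent variables $u,v,w,z$. One writes $f\perp g$ if this expression is identically zero. *)

(* Defs.v *)
From HB Require Import structures.
From mathcomp Require Import all_boot all_order all_algebra.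
From mathcomp Require Import reals.
From mathcomp Require Import complex.
Set Implicit Arguments. Unset Strict Implicit. Unset Printing Implicit Defensive.
Import Order.TTheory GRing.Theory Num.Theory.
Local Open Scope ring_scope.
Local Open Scope complex_scope.

(* A bilateral formal series sum_{i,j in Z} c(i,j) x^i y^j with complex
   coefficients (C = R[i] for a real-number type R : realType) is
   represented by its coefficient function c : int -> int -> C. *)
Definition bseries (R : realType) := int -> int -> R[i].

Definition bs_nonzero (R : realType) (f : bseries R) : Prop :=
  exists i j, f i j != 0.

Definition bs_antisym (R : realType) (g : bseries R) : Prop :=
  forall i j, g i j = - g j i.

(* Coefficient of u^a v^b w^c z^d in
   g(u,v) f(z,w) - g(u,w) f(z,v) + g(v,w) f(z,u). *)
Definition perp_coef (R : realType) (f g : bseries R) (a b c d : int) : R[i] :=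
  g a b * f d c - g a c * f d b + g b c * f d a.

Definition bs_perp (R : realType) (f g : bseries R) : Prop :=
  forall a b c d, perp_coef f g a b c d = 0.

(* Main.v *)
Require Import Defs.
From HB Require Import structures.
From mathcomp Require Import all_boot all_order all_algebra.
From mathcomp Require Import reals complex.
From mathcomp Require Import ring.
Import GRing.Theory.
Local Open Scope ring_scope.
Lemma solve_aux (R : realType) (f g : bseries R) a b e0 d0 (Hf : f d0 e0 != 0)
  (H : perp_coef f g a b e0 d0 = 0) :
  g a b = g a e0 / f d0 e0 * f d0 b - g b e0 / f d0 e0 * f d0 a.
Proof.
move: H; rewrite /perp_coef => H.
have E : g a b * f d0 e0 = g a e0 * f d0 b - g b e0 * f d0 a.
  apply/eqP. rewrite -subr_eq0. apply/eqP. rewrite -H. ring.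
apply: (mulIf Hf).
rewrite E.
have -> : g a e0 / f d0 e0 * f d0 b - g b e0 / f d0 e0 * f d0 a = (g a e0 * f d0 b - g b e0 * f d0 a) / f d0 e0 by ring.
by rewrite mulfVK.
Qed.

Arguments solve_aux {R f g a b e0 d0}.

Theorem lemma2p4 (R : realType) (f g : bseries R) :
  bs_nonzero f -> bs_nonzero g -> bs_antisym g ->
  bs_perp f g -> bs_perp g g.
Proof.
move=> [d0 [e0 Hf]] _ _ Hp.
have [psi Hpsi] : exists psi : int -> R[i], forall a b,
    g a b = psi a * f d0 b - psi b * f d0 a.
  exists (fun a => g a e0 / f d0 e0) => a b.
  exact: (solve_aux Hf (Hp a b e0 d0)).
move=> a b c d; rewrite /perp_coef !Hpsi; ring.
Qed.
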